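(* For strictly positive formulas $A,B$, $A\vdash_{\mathbf{RC\omega}}B$ iff $\mathrm{RC}\omega_S[A]\Vdash B$ (truth at the root), where $S=\ell(\{A,B\})$.
   Context: Strictly positive formulas: $A::= p\mid \top\mid (A\land B)\mid \alpha A$, $\alpha\le\omega$; $\ell(X)$ is the set of modalities occurring in formulas of $X$. $\mathbf{RC\omega}$: $A\vdash A$; $A\vdash\top$; cut; $A\land B\vdash A$; $A\land B\vdash B$; from $A\vdash B$, $A\vdash C$ infer $A\vdash B\land C$; from $A\vdash B$ infer $\alpha A\vdash\alpha B$; $\alpha\alpha A\vdash\alpha A$; $\alpha\beta A\vdash\beta A$, $\beta\alpha A\vdash\beta A$ for $\alpha\ge\beta$; $\alpha A\land\beta B\vdash\alpha(A\land\beta B)$ for $\alpha>\beta$; $\alpha A\vdash\beta A$ for $\alpha>\beta$; $\omega A\vdash A$. Kripke models of signature $S$: $W$, relations $(R_\alpha)_{\alpha\in S}$, valuation $v$; $x\Vdash\alpha A$ iff $\exists y(xR_\alpha y\wedge y\Vdash A)$. RC$_S$-frame: for $\alpha,\beta\in S$, $R_\alpha R_\beta\subseteq R_{\min(\alpha,\beta)}$; for $\alpha>\beta$, $xR_\alpha y\wedge xR_\beta z\Rightarrow yR_\beta z$; and $R_\alpha\subseteq R_\beta$ for $\beta<\alpha$. The canonical tree $T[A]$: for a variable or $\top$, one node with empty relations where only that variable is true; $T[B\land C]$: disjoint union of $T[B],T[C]$ with roots identified, a variable true at the root iff true at either root; $T[\alpha B]$: $T[B]$ plus a new root $r$ (all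 variables false) with $rR_\alpha$(root of $T[B]$). $\mathrm{RC}_S[A]$ ($S\supseteq\ell(A)$) is $T[A]$ with its relations replaced by the least relations containing them that form an RC$_S$-frame. $\mathrm{RC}\omega_S[A]$ has the frame of $\mathrm{RC}_S[A]$ and valuation $v'$ with $v'(x,p)=1$ iff $v(x,p)=1$ or there is $y$ with $xR_\omega y$ and $v(y,p)=1$, where $v$ is the valuation of $\mathrm{RC}_S[A]$. *)

(* Defs.v *)
From Stdlib Require Import List Arith.
Import ListNotations.

Inductive modality : Type := MFin (n : nat) | MOmega.

Definition mlt (a b : modality) : Prop :=
  match a, b with
  | MFin m, MFin n => m < n
  | MFin _, MOmega => True
  | MOmega, _ => False
  end.

Definition mle (a b : modality) : Prop := a = b \/ mlt a b.

Definition mmin (a b : modality) : modality :=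
  match a, b with
  | MFin m, MFin n => MFin (Nat.min m n)
  | MOmega, b => b
  | a, MOmega => a
  end.

Inductive fml : Type :=
| Var (p : nat)
| Top
| And (A B : fml)
| Dia (a : modality) (A : fml).

Fixpoint mods (A : fml) : list modality :=
  match A with
  | Var _ | Top => []
  | And B C => mods B ++ mods C
  | Dia a B => a :: mods B
  end.

Inductive deriv : fml -> fml -> Prop :=
| d_refl A : deriv A A
| d_top A : deriv A Top
| d_cut A B C : deriv A B -> deriv B C -> deriv A C
| d_andl A B : deriv (And A B) A
| d_andr A B : deriv (And A B) B
| d_andi A B C : deriv A B -> deriv A C -> deriv A (And B C)
| d_mono a A B : deriv A B -> deriv (Dia a A) (Dia a B)
| d_trans a A : deriv (Dia a (Dia a A)) (Dia a A)
| d_ge1 a b A : mle b a -> deriv (Dia a (Dia b A)) (Dia b A)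
| d_ge2 a b A : mle b a -> deriv (Dia b (Dia a A)) (Dia b A)
| d_j a b A B : mlt b a -> deriv (And (Dia a A) (Dia b B)) (Dia a (And A (Dia b B)))
| d_mon a b A : mlt b a -> deriv (Dia a A) (Dia b A)
| d_omega A : deriv (Dia MOmega A) A.

Fixpoint forces {W : Type} (R : modality -> W -> W -> Prop) (V : W -> nat -> Prop)
  (x : W) (A : fml) : Prop :=
  match A with
  | Var p => V x p
  | Top => True
  | And B C => forces R V x B /\ forces R V x C
  | Dia a B => exists y, R a x y /\ forces R V y B
  end.

(* Finite labelled trees: variables true at the root, and the list of
   children, each with the modality labelling the edge from the root. *)
Inductive tree : Type := Node (vs : list nat) (kids : list (modality * tree)).

Fixpoint T (A : fml) : tree :=
  match A with
  | Var p => Node [p] []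
  | Top => Node [] []
  | And B C =>
      match T B, T C with
      | Node v1 k1, Node v2 k2 => Node (v1 ++ v2) (k1 ++ k2)
      end
  | Dia a B => Node [] [(a, T B)]
  end.

(* Nodes are addressed by paths from the root (sequence of child indices). *)
Fixpoint subtree (t : tree) (x : list nat) : option tree :=
  match x with
  | [] => Some t
  | i :: x' =>
      match t with
      | Node _ ks =>
          match nth_error ks i with
          | Some (_, t') => subtree t' x'
          | None => None
          end
      end
  end.

Definition node (t : tree) : Type := { x : list nat | subtree t x <> None }.

Lemma root_valid (t : tree) : subtree t [] <> None.
Proof. discriminate. Qed.

Definition root (t : tree) : node t := exist _ [] (root_valid t).

Definition base_edge (t : tree) (a : modality) (x y : node t) : Prop :=
  exists i vs ks t', proj1_sig y = proj1_sig x ++ [i] /\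
    subtree t (proj1_sig x) = Some (Node vs ks) /\ nth_error ks i = Some (a, t').

Definition base_val (t : tree) (x : node t) (p : nat) : Prop :=
  exists vs ks, subtree t (proj1_sig x) = Some (Node vs ks) /\ In p vs.

Inductive RCrel (S : list modality) (t : tree) : modality -> node t -> node t -> Prop :=
| rc_base a x y : base_edge t a x y -> RCrel S t a x y
| rc_comp a b x y z : In a S -> In b S ->
    RCrel S t a x y -> RCrel S t b y z -> RCrel S t (mmin a b) x z
| rc_eucl a b x y z : In a S -> In b S -> mlt b a ->
    RCrel S t a x y -> RCrel S t b x z -> RCrel S t b y z
| rc_incl a b x y : In a S -> In b S -> mlt b a ->
    RCrel S t a x y -> RCrel S t b x y.

(* RC_S[A] : frame RCrel S (T A) with valuation base_val (T A).
   RC-omega_S[A] : same frame, valuation v'. *)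
Definition RCw_val (S : list modality) (A : fml) (x : node (T A)) (p : nat) : Prop :=
  base_val (T A) x p \/
  exists y, RCrel S (T A) MOmega x y /\ base_val (T A) y p.

(* Main.v *)
Require Import Defs.
From Stdlib Require Import List Arith Lia Classical.
Import ListNotations.

Definition mod_eq_dec (a b : modality) : {a = b} + {a <> b}.
Proof. decide equality; apply Nat.eq_dec. Defined.

Lemma mlt_dec a b : {mlt a b} + {~ mlt a b}.
Proof. destruct a as [m|], b as [n|]; simpl; [apply lt_dec | left; exact I | right; tauto | right; tauto]. Qed.

Lemma mlt_total a b : mlt a b \/ a = b \/ mlt b a.
Proof.
  destruct a as [m|], b as [n|]; simpl; auto.
  destruct (lt_eq_lt_dec m n) as [[H|H]|H]; subst; auto.
Qed.

Lemma mlt_trans a b c : mlt a b -> mlt b c -> mlt a c.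
Proof. destruct a as [m|], b as [n|], c as [k|]; simpl; intros; try exact I; try lia; tauto. Qed.

Lemma mlt_irrefl a : ~ mlt a a.
Proof. destruct a; simpl; [lia | tauto]. Qed.

Lemma mlt_mle_trans a b c : mlt a b -> mle b c -> mlt a c.
Proof. intros H [<-|H']; auto. eapply mlt_trans; eauto. Qed.

Lemma mmin_id a : mmin a a = a.
Proof. destruct a; simpl; [rewrite Nat.min_id|]; reflexivity. Qed.

Lemma mmin_le_r a b : mle b a -> mmin a b = b.
Proof.
  intros [<-|H]; [apply mmin_id|].
  destruct a as [m|], b as [n|]; simpl in *; try tauto; try reflexivity.
  f_equal; apply Nat.min_r; lia.
Qed.

Lemma mmin_le_l a b : mle a b -> mmin a b = a.
Proof.
  intros [<-|H]; [apply mmin_id|].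
  destruct a as [m|], b as [n|]; simpl in *; try tauto; try reflexivity.
  f_equal; apply Nat.min_l; lia.
Qed.

Lemma mmin_cases a b : mmin a b = a \/ mmin a b = b.
Proof.
  destruct (mlt_total a b) as [H|[H|H]].
  - left; apply mmin_le_l; right; auto.
  - subst; left; apply mmin_id.
  - right; apply mmin_le_r; right; auto.
Qed.

Lemma mlt_mmin c a b : mlt c (mmin a b) -> mlt c a /\ mlt c b.
Proof.
  destruct (mlt_total a b) as [H|[H|H]].
  - rewrite mmin_le_l by (right; auto). intros; split; auto. eapply mlt_trans; eauto.
  - subst; rewrite mmin_id; auto.
  - rewrite mmin_le_r by (right; auto). intros; split; auto. eapply mlt_trans; eauto.
Qed.

Lemma deriv_comp2 a b F : deriv (Dia a (Dia b F)) (Dia (mmin a b) F).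
Proof.
  destruct (mlt_total a b) as [H|[H|H]].
  - rewrite mmin_le_l by (right; auto). apply (d_ge2 b a F); right; auto.
  - subst; rewrite mmin_id; apply d_trans.
  - rewrite mmin_le_r by (right; auto). apply (d_ge1 a b F); right; auto.
Qed.

Definition closed (G : fml -> Prop) :=
  (forall F H, G F -> deriv F H -> G H) /\ (forall F H, G F -> G H -> G (And F H)) /\ G Top.

Definition RN (a : modality) (G D : fml -> Prop) : Prop :=
  closed G /\ closed D /\ (forall F, D F -> G (Dia a F)) /\
  (forall b Z, mlt b a -> G (Dia b Z) -> D (Dia b Z)).

Definition VN (G : fml -> Prop) (p : nat) : Prop := G (Var p).

Lemma RN_comp a b G D E : RN a G D -> RN b D E -> RN (mmin a b) G E.
Proof.
  intros [HG [HD [H1 H2]]] [_ [HE [H3 H4]]].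
  split; [exact HG|]. split; [exact HE|]. split.
  - intros F HF. apply (proj1 HG) with (Dia a (Dia b F)); [auto | apply deriv_comp2].
  - intros c Z Hc HZ. apply mlt_mmin in Hc as [Ha Hb]. auto.
Qed.

Lemma RN_eucl a b G D E : mlt b a -> RN a G D -> RN b G E -> RN b D E.
Proof.
  intros Hba [HG [HD [H1 H2]]] [_ [HE [H3 H4]]].
  split; [exact HD|]. split; [exact HE|]. split.
  - intros F HF. apply H2; auto.
  - intros c Z Hc HZ. apply H4; auto.
    apply (proj1 HG) with (Dia a (Dia c Z)); auto.
    apply d_ge1. right. eapply mlt_trans; eauto.
Qed.

Lemma RN_incl a b G D : mlt b a -> RN a G D -> RN b G D.
Proof.
  intros Hba [HG [HD [H1 H2]]].
  split; [exact HG|]. split; [exact HD|]. split.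
  - intros F HF. apply (proj1 HG) with (Dia a F); auto. apply d_mon; auto.
  - intros c Z Hc HZ. apply H2; auto. eapply mlt_trans; eauto.
Qed.

Inductive lowd (a : modality) (G : fml -> Prop) : fml -> Prop :=
| ld_top : lowd a G Top
| ld_dia b Z : mlt b a -> G (Dia b Z) -> lowd a G (Dia b Z)
| ld_and E1 E2 : lowd a G E1 -> lowd a G E2 -> lowd a G (And E1 E2).

Lemma lowd_in a G E : closed G -> lowd a G E -> G E.
Proof.
  intros HG H; induction H; auto.
  - apply HG. - apply HG; auto.
Qed.

Lemma lowd_j a G E : lowd a G E -> forall B, deriv (And (Dia a B) E) (Dia a (And B E)).
Proof.
  intros H; induction H; intros B.
  - eapply d_cut; [apply d_andl|]. apply d_mono. apply d_andi; [apply d_refl | apply d_top].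
  - apply d_j; auto.
  - eapply d_cut with (And (And (Dia a B) E1) E2).
    { apply d_andi; [apply d_andi; [apply d_andl| eapply d_cut; [apply d_andr | apply d_andl]] |
        eapply d_cut; [apply d_andr | apply d_andr]]. }
    eapply d_cut with (And (Dia a (And B E1)) E2).
    { apply d_andi; [eapply d_cut; [apply d_andl | apply IHlowd1] | apply d_andr]. }
    eapply d_cut; [apply IHlowd2|]. apply d_mono.
    apply d_andi; [eapply d_cut; [apply d_andl | apply d_andl]|].
    apply d_andi; [eapply d_cut; [apply d_andl | apply d_andr] | apply d_andr].
Qed.

Lemma witness a G B : closed G -> G (Dia a B) ->
  exists D, RN a G D /\ D B.
Proof.
  intros HG HaB.
  exists (fun F => exists E, lowd a G E /\ deriv (And B E) F).
  assert (HD : closed (fun F => exists E, lowd a G E /\ deriv (And B E) F)).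
  { split; [|split].
    - intros F H [E [HE HF]] HFH. exists E; split; auto. eapply d_cut; eauto.
    - intros F H [E1 [HE1 HF]] [E2 [HE2 HH]]. exists (And E1 E2). split; [constructor; auto|].
      apply d_andi.
      + eapply d_cut; [|exact HF]. apply d_andi; [apply d_andl | eapply d_cut; [apply d_andr| apply d_andl]].
      + eapply d_cut; [|exact HH]. apply d_andi; [apply d_andl | eapply d_cut; [apply d_andr| apply d_andr]].
    - exists Top; split; [constructor | apply d_top]. }
  split; [split; [exact HG | split; [exact HD | split]] |].
  - intros F [E [HE HF]].
    assert (G (Dia a (And B E))).
    { apply (proj1 HG) with (And (Dia a B) E); [apply (proj1 (proj2 HG)); auto; eapply lowd_in; eauto | eapply lowd_j; eauto]. }
    apply (proj1 HG) with (Dia a (And B E)); auto. apply d_mono; auto.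
  - intros b Z Hb HZ. exists (Dia b Z). split; [constructor; auto | apply d_andr].
  - exists Top. split; [constructor | apply d_andl].
Qed.

Lemma N_truth : forall B G, closed G -> forces RN VN G B -> G B.
Proof.
  induction B; simpl; intros G HG H.
  - exact H.
  - apply (proj2 (proj2 HG)).
  - destruct H as [H1 H2]; apply (proj1 (proj2 HG)); [apply (IHB1 G) | apply (IHB2 G)]; auto.
  - destruct H as [D [HR HD]]. apply HR. apply (IHB D); auto. apply HR.
Qed.
Lemma subtree_app t x y :
  subtree t (x ++ y) = match subtree t x with Some s => subtree s y | None => None end.
Proof.
  revert t; induction x as [|i x IH]; intros t; simpl; [reflexivity|].
  destruct t as [vs ks]. destruct (nth_error ks i) as [[m t']|]; auto.
Qed.

Lemma subtree_and_cons v1 k1 v2 k2 j x :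
  subtree (Node (v1 ++ v2) (k1 ++ k2)) (j :: x) =
  if j <? length k1 then subtree (Node v1 k1) (j :: x)
  else subtree (Node v2 k2) ((j - length k1) :: x).
Proof.
  simpl. destruct (Nat.ltb_spec j (length k1)).
  - rewrite nth_error_app1; auto.
  - rewrite nth_error_app2; auto.
Qed.

Lemma T_and_eq A1 A2 v1 k1 v2 k2 : T A1 = Node v1 k1 -> T A2 = Node v2 k2 ->
  T (And A1 A2) = Node (v1 ++ v2) (k1 ++ k2).
Proof. intros E1 E2. simpl. rewrite E1, E2. reflexivity. Qed.

Lemma labels_T : forall A x vs ks i a t', subtree (T A) x = Some (Node vs ks) ->
  nth_error ks i = Some (a, t') -> In a (mods A).
Proof.
  induction A as [p| |A1 IH1 A2 IH2|m B IH]; intros x vs ks i a t' H Hn.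
  - destruct x as [|j x]; simpl in H.
    + injection H; intros; subst. destruct i; discriminate.
    + destruct j; discriminate.
  - destruct x as [|j x]; simpl in H.
    + injection H; intros; subst. destruct i; discriminate.
    + destruct j; discriminate.
  - destruct (T A1) as [v1 k1] eqn:E1. destruct (T A2) as [v2 k2] eqn:E2.
    rewrite (T_and_eq A1 A2 v1 k1 v2 k2 E1 E2) in H. simpl mods.
    destruct x as [|j x].
    + simpl in H. injection H; intros; subst.
      destruct (lt_dec i (length k1)).
      * rewrite nth_error_app1 in Hn by auto. apply in_or_app; left.
        apply (IH1 [] v1 k1 i a t'); [try rewrite E1; reflexivity | exact Hn].
      * rewrite nth_error_app2 in Hn by lia. apply in_or_app; right.
        apply (IH2 [] v2 k2 (i - length k1) a t'); [try rewrite E2; reflexivity | exact Hn].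
    + rewrite subtree_and_cons in H. destruct (j <? length k1).
      * apply in_or_app; left. apply (IH1 (j :: x) vs ks i a t'); [try rewrite E1; exact H | exact Hn].
      * apply in_or_app; right. apply (IH2 ((j - length k1) :: x) vs ks i a t'); [try rewrite E2; exact H | exact Hn].
  - simpl in H. destruct x as [|j x].
    + injection H; intros; subst. destruct i; [|destruct i]; simpl in Hn; try discriminate.
      injection Hn; intros; subst. left; reflexivity.
    + destruct j as [|j]; simpl in H.
      * right. eapply IH; eauto.
      * destruct j; discriminate.
Qed.

Lemma build : forall A (G : fml -> Prop), closed G -> G A ->
  exists f : list nat -> fml -> Prop, f [] = G /\
   (forall x vs ks i a t', subtree (T A) x = Some (Node vs ks) -> nth_error ks i = Some (a, t') ->
        RN a (f x) (f (x ++ [i]))) /\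
   (forall x vs ks p, subtree (T A) x = Some (Node vs ks) -> In p vs -> f x (Var p)).
Proof.
  induction A as [p| |A1 IH1 A2 IH2|m B IH]; intros G HG HA.
  - exists (fun _ => G). split; [reflexivity|]. split.
    + intros x vs ks i a t' H Hn. destruct x as [|j x]; simpl in H.
      * injection H; intros; subst. destruct i; discriminate.
      * destruct j; discriminate.
    + intros x vs ks q H Hq. destruct x as [|j x]; simpl in H.
      * injection H; intros; subst. destruct Hq as [<-|[]]. exact HA.
      * destruct j; discriminate.
  - exists (fun _ => G). split; [reflexivity|]. split.
    + intros x vs ks i a t' H Hn. destruct x as [|j x]; simpl in H.
      * injection H; intros; subst. destruct i; discriminate.
      * destruct j; discriminate.
    + intros x vs ks q H Hq. destruct x as [|j x]; simpl in H.
      * injection H; intros; subst. destruct Hq.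
      * destruct j; discriminate.
  - assert (G A1) by (apply (proj1 HG) with (And A1 A2); [exact HA | apply d_andl]).
    assert (G A2) by (apply (proj1 HG) with (And A1 A2); [exact HA | apply d_andr]).
    destruct (IH1 G HG H) as [fB [HB0 [HBe HBv]]].
    destruct (IH2 G HG H0) as [fC [HC0 [HCe HCv]]].
    destruct (T A1) as [v1 k1] eqn:E1. destruct (T A2) as [v2 k2] eqn:E2.
    rewrite (T_and_eq A1 A2 v1 k1 v2 k2 E1 E2).
    exists (fun x => match x with [] => G | i :: x' =>
       if i <? length k1 then fB (i :: x') else fC ((i - length k1) :: x') end).
    split; [reflexivity|]. split.
    + intros x vs ks i a t' Hs Hn. destruct x as [|j x].
      * simpl in Hs. injection Hs as <- <-. simpl.
        destruct (Nat.ltb_spec i (length k1)).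
        -- rewrite nth_error_app1 in Hn by auto. rewrite <- HB0.
           apply (HBe [] v1 k1 i a t'); [reflexivity | exact Hn].
        -- rewrite nth_error_app2 in Hn by auto. rewrite <- HC0.
           apply (HCe [] v2 k2 (i - length k1) a t'); [reflexivity | exact Hn].
      * rewrite subtree_and_cons in Hs. simpl.
        destruct (j <? length k1).
        -- apply (HBe (j :: x) vs ks i a t'); auto.
        -- apply (HCe ((j - length k1) :: x) vs ks i a t'); auto.
    + intros x vs ks q Hs Hq. destruct x as [|j x].
      * simpl in Hs. injection Hs as <- <-.
        apply in_app_or in Hq as [Hq|Hq].
        -- rewrite <- HB0. apply (HBv [] v1 k1 q); auto.
        -- rewrite <- HC0. apply (HCv [] v2 k2 q); auto.
      * rewrite subtree_and_cons in Hs. simpl.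
        destruct (j <? length k1).
        -- apply (HBv (j :: x) vs ks q); auto.
        -- apply (HCv ((j - length k1) :: x) vs ks q); auto.
  - destruct (witness m G B HG HA) as [D [HR HD]].
    destruct (IH D (proj1 (proj2 HR)) HD) as [fB [HB0 [HBe HBv]]].
    exists (fun x => match x with [] => G | 0 :: x' => fB x' | _ => G end).
    split; [reflexivity|]. split.
    + intros x vs ks i a t' Hs Hn. simpl in Hs. destruct x as [|j x].
      * injection Hs as <- <-. destruct i; [|destruct i]; simpl in Hn; try discriminate.
        injection Hn as <- <-. simpl. rewrite HB0. exact HR.
      * destruct j as [|j]; simpl in Hs.
        -- simpl. apply (HBe x vs ks i a t'); auto.
        -- destruct j; discriminate.
    + intros x vs ks q Hs Hq. simpl in Hs. destruct x as [|j x].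
      * injection Hs; intros; subst. destruct Hq.
      * destruct j as [|j]; simpl in Hs.
        -- simpl. apply (HBv x vs ks q); auto.
        -- destruct j; discriminate.
Qed.

Lemma completeness S A B :
  forces (RCrel S (T A)) (RCw_val S A) (root (T A)) B -> deriv A B.
Proof.
  intros H.
  set (G := fun F => deriv A F).
  assert (HG : closed G).
  { split; [|split]; unfold G; intros.
    - eapply d_cut; eauto. - apply d_andi; auto. - apply d_top. }
  destruct (build A G HG (d_refl A)) as [f [Hf0 [Hfe Hfv]]].
  assert (hom : forall a x y, RCrel S (T A) a x y -> RN a (f (proj1_sig x)) (f (proj1_sig y))).
  { intros a x y Hr. induction Hr.
    - destruct H0 as [i [vs [ks [t' [Hy [Hs Hn]]]]]]. rewrite Hy. eapply Hfe; eauto.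
    - eapply RN_comp; eauto.
    - eapply RN_eucl; eauto.
    - eapply RN_incl; eauto. }
  assert (pres : forall C (x : node (T A)), forces (RCrel S (T A)) (RCw_val S A) x C ->
             forces RN VN (f (proj1_sig x)) C).
  { induction C as [p| |C1 IH1 C2 IH2|a C IH]; intros x Hx; simpl in *.
    - unfold VN. destruct Hx as [[vs [ks [Hs Hp]]] | [y [Hy [vs [ks [Hs Hp]]]]]].
      + eapply Hfv; eauto.
      + pose proof (hom _ _ _ Hy) as [Hc1 [Hc2 [Hd _]]].
        apply (proj1 Hc1) with (Dia MOmega (Var p)); [apply Hd; eapply Hfv; eauto | apply d_omega].
    - exact I.
    - destruct Hx; split; auto.
    - destruct Hx as [y [Hy HC]]. exists (f (proj1_sig y)). split; auto. }
  pose proof (N_truth B (f []) ltac:(rewrite Hf0; exact HG) (pres B (root (T A)) H)) as HB.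
  rewrite Hf0 in HB. exact HB.
Qed.
Definition RCframe {W : Type} (L : list modality) (R : modality -> W -> W -> Prop) : Prop :=
  (forall a b x y z, In a L -> In b L -> R a x y -> R b y z -> R (mmin a b) x z) /\
  (forall a b x y z, In a L -> In b L -> mlt b a -> R a x y -> R b x z -> R b y z) /\
  (forall a b x y, In a L -> In b L -> mlt b a -> R a x y -> R b x y).

Definition omega_closed {W : Type} (R : modality -> W -> W -> Prop) (V : W -> nat -> Prop) : Prop :=
  forall x y p, R MOmega x y -> V y p -> V x p.

Lemma RCframe_mono {W} (L1 L2 : list modality) (R : modality -> W -> W -> Prop) :
  incl L1 L2 -> RCframe L2 R -> RCframe L1 R.
Proof.
  intros Hi [H1 [H2 H3]]. split; [|split]; intros.
  - apply H1 with y; auto.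
  - apply H2 with a x; auto.
  - apply H3 with a; auto.
Qed.

Lemma omega_down {W} L (R : modality -> W -> W -> Prop) V :
  RCframe L R -> omega_closed R V -> In MOmega L ->
  forall F, incl (mods F) L -> forall x y, R MOmega x y -> forces R V y F -> forces R V x F.
Proof.
  intros HF HO Hw F. induction F as [p| |F1 IH1 F2 IH2|a F IH]; simpl; intros Hi x y Hxy Hy.
  - eapply HO; eauto.
  - exact I.
  - destruct Hy. split; [eapply IH1|eapply IH2]; eauto;
      intros u Hu; apply Hi; apply in_or_app; auto.
  - destruct Hy as [z [Hz HzF]]. exists z. split; auto.
    apply ((proj1 HF) MOmega a x y z Hw (Hi a (or_introl eq_refl)) Hxy Hz).
Qed.

Lemma soundness : forall F G, deriv F G -> exists L, forall (W : Type) (R : modality -> W -> W -> Prop)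
  (V : W -> nat -> Prop), RCframe L R -> omega_closed R V -> forall x, forces R V x F -> forces R V x G.
Proof.
  intros F G H. induction H.
  - exists []; auto.
  - exists []; simpl; auto.
  - destruct IHderiv1 as [L1 H1], IHderiv2 as [L2 H2]. exists (L1 ++ L2).
    intros W R V HF HO x Hx. eapply H2; [eapply RCframe_mono; [|exact HF]; apply incl_appr, incl_refl | exact HO |].
    eapply H1; [eapply RCframe_mono; [|exact HF]; apply incl_appl, incl_refl | exact HO | exact Hx].
  - exists []; simpl; intros; tauto.
  - exists []; simpl; intros; tauto.
  - destruct IHderiv1 as [L1 H1], IHderiv2 as [L2 H2]. exists (L1 ++ L2).
    intros W R V HF HO x Hx. split.
    + eapply H1; [eapply RCframe_mono; [|exact HF]; apply incl_appl, incl_refl | exact HO | exact Hx].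
    + eapply H2; [eapply RCframe_mono; [|exact HF]; apply incl_appr, incl_refl | exact HO | exact Hx].
  - destruct IHderiv as [L H1]. exists L. intros W R V HF HO x [y [Hy HA]]. exists y. split; eauto.
  - exists [a]. intros W R V HF HO x [y [Hy [z [Hz HA]]]]. exists z. split; auto.
    pose proof ((proj1 HF) a a x y z (or_introl eq_refl) (or_introl eq_refl) Hy Hz) as Hc.
    rewrite mmin_id in Hc. exact Hc.
  - exists [a; b]. intros W R V HF HO x [y [Hy [z [Hz HA]]]]. exists z. split; auto.
    pose proof ((proj1 HF) a b x y z ltac:(simpl; auto) ltac:(simpl; auto) Hy Hz) as Hc.
    rewrite mmin_le_r in Hc by exact H. exact Hc.
  - exists [a; b]. intros W R V HF HO x [y [Hy [z [Hz HA]]]]. exists z. split; auto.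
    pose proof ((proj1 HF) b a x y z ltac:(simpl; auto) ltac:(simpl; auto) Hy Hz) as Hc.
    rewrite mmin_le_l in Hc by exact H. exact Hc.
  - exists [a; b]. intros W R V HF HO x [[y [Hy HA]] [z [Hz HB]]]. exists y. split; auto.
    split; auto. exists z. split; auto.
    apply ((proj1 (proj2 HF)) a b x y z ltac:(simpl; auto) ltac:(simpl; auto) H Hy Hz).
  - exists [a; b]. intros W R V HF HO x [y [Hy HA]]. exists y. split; auto.
    apply ((proj2 (proj2 HF)) a b x y ltac:(simpl; auto) ltac:(simpl; auto) H Hy).
  - exists (MOmega :: mods A). intros W R V HF HO x [y [Hy HA]].
    eapply omega_down; eauto; [left; reflexivity | intros u Hu; right; exact Hu].
Qed.
Lemma mle_or_lt a b : mle a b \/ mlt b a.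
Proof.
  destruct (mlt_total a b) as [H|[H|H]]; [left; right; auto | left; left; auto | right; auto].
Qed.

Lemma least_above : forall S c a, In a S -> mlt c a ->
  exists t, In t S /\ mlt c t /\ forall u, In u S -> mlt c u -> mle t u.
Proof.
  induction S as [|h S IH]; intros c a Ha Hca; [destruct Ha|].
  destruct (classic (exists a', In a' S /\ mlt c a')) as [[a' [Ha' Hca']] | Hno].
  - destruct (IH c a' Ha' Hca') as [t0 [Ht0 [Hct0 Hmin0]]].
    destruct (mlt_dec c h) as [Hch|Hch].
    + destruct (mlt_dec h t0) as [Hht|Hht].
      * exists h. split; [left; reflexivity|]. split; auto.
        intros u [<-|Hu] Hcu; [left; reflexivity|].
        right. eapply mlt_mle_trans; eauto.
      * exists t0. split; [right; auto|]. split; auto.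
        intros u [<-|Hu] Hcu; [|auto].
        destruct (mle_or_lt t0 h); auto. contradiction.
    + exists t0. split; [right; auto|]. split; auto.
      intros u [<-|Hu] Hcu; [contradiction|auto].
  - destruct Ha as [<-|Ha].
    + exists h. split; [left; reflexivity|]. split; auto.
      intros u [<-|Hu] Hcu; [left; reflexivity|]. exfalso; apply Hno; eauto.
    + exfalso; apply Hno; eauto.
Qed.

Inductive tc {W : Type} (r : W -> W -> Prop) : W -> W -> Prop :=
| tc1 x y : r x y -> tc r x y
| tcS x y z : r x y -> tc r y z -> tc r x z.

Lemma tc_trans {W} (r : W -> W -> Prop) x y z : tc r x y -> tc r y z -> tc r x z.
Proof. intros H; induction H; intros; [eapply tcS; eauto | eapply tcS; eauto]. Qed.

Definition Cstep {W : Type} (R : modality -> W -> W -> Prop) (S : list modality) (c : modality) (y z : W) : Prop :=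
  exists t, In t S /\ mlt c t /\ (forall u, In u S -> mlt c u -> mle t u) /\
    exists x, (x = y \/ R t x y) /\ R t x z.

Section Ext.
Context {W : Type} (R : modality -> W -> W -> Prop) (S : list modality) (c : modality).
Hypothesis HF : RCframe S R.

Lemma incl_le a b x y : In a S -> In b S -> mle b a -> R a x y -> R b x y.
Proof. intros Ha Hb [<-|H] Hr; auto. apply ((proj2 (proj2 HF)) a b x y Ha Hb H Hr). Qed.

Lemma step_low b : In b S -> mlt b c -> forall y z, Cstep R S c y z -> R b y z.
Proof.
  intros Hb Hbc y z [t [Ht [Hct [_ [x [Hx Hxz]]]]]].
  assert (Hbt : mlt b t) by (eapply mlt_trans; eauto).
  destruct Hx as [<-|Hxy].
  - eapply incl_le; eauto. right; auto.
  - apply ((proj1 (proj2 HF)) t b x y z Ht Hb Hbt Hxy). eapply incl_le; eauto. right; auto.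
Qed.

Lemma tc_low b : In b S -> mlt b c -> forall y z, tc (Cstep R S c) y z -> R b y z.
Proof.
  intros Hb Hbc y z H. induction H.
  - eapply step_low; eauto.
  - pose proof ((proj1 HF) b b x y z Hb Hb (step_low b Hb Hbc x y H) IHtc) as Hc.
    rewrite mmin_id in Hc; exact Hc.
Qed.

Lemma high_step a : In a S -> mlt c a -> forall y z, R a y z -> Cstep R S c y z.
Proof.
  intros Ha Hca y z Hr.
  destruct (least_above S c a Ha Hca) as [t [Ht [Hct Hmin]]].
  exists t. split; auto. split; auto. split; auto.
  exists y. split; [left; reflexivity|]. apply (incl_le a t y z Ha Ht (Hmin a Ha Hca) Hr).
Qed.

Lemma eucl_low_step b : In b S -> mlt b c -> forall x y z, Cstep R S c x y -> R b x z -> R b y z.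
Proof.
  intros Hb Hbc x y z H Hxz.
  destruct H as [t [Ht [Hct [_ [w [Hw Hwy]]]]]].
  assert (Hbt : mlt b t) by (eapply mlt_trans; eauto).
  destruct Hw as [<-|Hwx].
  - apply ((proj1 (proj2 HF)) t b w y z Ht Hb Hbt Hwy Hxz).
  - pose proof ((proj1 HF) t b w x z Ht Hb Hwx Hxz) as Hc.
    rewrite mmin_le_r in Hc by (right; auto).
    apply ((proj1 (proj2 HF)) t b w y z Ht Hb Hbt Hwy Hc).
Qed.

Lemma eucl_low b : In b S -> mlt b c -> forall x y z, tc (Cstep R S c) x y -> R b x z -> R b y z.
Proof.
  intros Hb Hbc x y z H. revert z. induction H; intros w Hxw.
  - eapply eucl_low_step; eauto.
  - apply IHtc. eapply eucl_low_step; eauto.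
Qed.

Lemma eucl_high_step a : In a S -> mlt c a -> forall x y z, R a x y -> Cstep R S c x z -> Cstep R S c y z.
Proof.
  intros Ha Hca x y z Hxy [t [Ht [Hct [Hmin [w [Hw Hwz]]]]]].
  assert (Rt : R t x y) by (apply (incl_le a t x y Ha Ht (Hmin a Ha Hca) Hxy)).
  exists t. split; auto. split; auto. split; auto.
  destruct Hw as [<-|Hwx].
  - exists w. split; [right; exact Rt | exact Hwz].
  - exists w. split; [right | exact Hwz].
    pose proof ((proj1 HF) t t w x y Ht Ht Hwx Rt) as Hc. rewrite mmin_id in Hc; exact Hc.
Qed.

Lemma eucl_high a : In a S -> mlt c a -> forall x y z, R a x y -> tc (Cstep R S c) x z -> tc (Cstep R S c) y z.
Proof.
  intros Ha Hca x y z Hxy H. destruct H.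
  - apply tc1. eapply eucl_high_step; eauto.
  - eapply tcS; [eapply eucl_high_step; eauto | exact H0].
Qed.
End Ext.

Definition Rext {W : Type} (R : modality -> W -> W -> Prop) (S : list modality) (c : modality) :
  modality -> W -> W -> Prop :=
  fun a x y => if mod_eq_dec a c then tc (Cstep R S c) x y else R a x y.

Lemma Rext_c {W} (R : modality -> W -> W -> Prop) S c x y : Rext R S c c x y <-> tc (Cstep R S c) x y.
Proof. unfold Rext. destruct (mod_eq_dec c c); [tauto | congruence]. Qed.

Lemma Rext_o {W} (R : modality -> W -> W -> Prop) S c a x y : a <> c -> (Rext R S c a x y <-> R a x y).
Proof. intros H. unfold Rext. destruct (mod_eq_dec a c); [congruence | tauto]. Qed.

Lemma ext_step {W : Type} (R : modality -> W -> W -> Prop) V S c :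
  RCframe S R -> omega_closed R V ->
  exists R', RCframe (c :: S) R' /\ omega_closed R' V /\ (forall a x y, In a S -> (R' a x y <-> R a x y)).
Proof.
  intros HF HO.
  destruct (in_dec mod_eq_dec c S) as [Hin|Hnin].
  { exists R. split; [|split; [exact HO | tauto]].
    eapply RCframe_mono; [|exact HF]. intros u [<-|Hu]; auto. }
  assert (Hne : forall a, In a S -> a <> c) by (intros a Ha E; subst; contradiction).
  exists (Rext R S c). split; [|split].
  - split; [|split].
    + intros a b x y z Ha Hb Hxy Hyz.
      destruct Ha as [<-|Ha], Hb as [<-|Hb].
      * rewrite mmin_id. apply Rext_c. apply Rext_c in Hxy, Hyz. eapply tc_trans; eauto.
      * apply Rext_c in Hxy. apply (Rext_o R S c _ _ _ (Hne b Hb)) in Hyz.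
        destruct (mlt_total c b) as [Hlt|[Heq|Hlt]].
        -- rewrite mmin_le_l by (right; auto). apply Rext_c.
           eapply tc_trans; [exact Hxy|]. apply tc1. eapply high_step; eauto.
        -- subst; contradiction.
        -- rewrite mmin_le_r by (right; auto). apply (Rext_o R S c _ _ _ (Hne b Hb)).
           pose proof ((proj1 HF) b b x y z Hb Hb (tc_low R S c HF b Hb Hlt x y Hxy) Hyz) as Hc.
           rewrite mmin_id in Hc; exact Hc.
      * apply Rext_c in Hyz. apply (Rext_o R S c _ _ _ (Hne a Ha)) in Hxy.
        destruct (mlt_total a c) as [Hlt|[Heq|Hlt]].
        -- rewrite mmin_le_l by (right; auto). apply (Rext_o R S c _ _ _ (Hne a Ha)).
           pose proof ((proj1 HF) a a x y z Ha Ha Hxy (tc_low R S c HF a Ha Hlt y z Hyz)) as Hc.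
           rewrite mmin_id in Hc; exact Hc.
        -- subst; contradiction.
        -- rewrite mmin_le_r by (right; auto). apply Rext_c.
           eapply tcS; [|exact Hyz]. eapply high_step; eauto.
      * assert (Hm : In (mmin a b) S) by (destruct (mmin_cases a b) as [E|E]; rewrite E; auto).
        apply (Rext_o R S c _ _ _ (Hne _ Hm)).
        apply (Rext_o R S c _ _ _ (Hne a Ha)) in Hxy. apply (Rext_o R S c _ _ _ (Hne b Hb)) in Hyz.
        apply (proj1 HF) with y; auto.
    + intros a b x y z Ha Hb Hba Hxy Hxz.
      destruct Ha as [<-|Ha], Hb as [<-|Hb].
      * exfalso; apply (mlt_irrefl _ Hba).
      * apply Rext_c in Hxy. apply (Rext_o R S c _ _ _ (Hne b Hb)) in Hxz.
        apply (Rext_o R S c _ _ _ (Hne b Hb)). eapply eucl_low; eauto.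
      * apply Rext_c in Hxz. apply (Rext_o R S c _ _ _ (Hne a Ha)) in Hxy.
        apply Rext_c. eapply eucl_high; eauto.
      * apply (Rext_o R S c _ _ _ (Hne a Ha)) in Hxy. apply (Rext_o R S c _ _ _ (Hne b Hb)) in Hxz.
        apply (Rext_o R S c _ _ _ (Hne b Hb)). apply (proj1 (proj2 HF)) with a x; auto.
    + intros a b x y Ha Hb Hba Hxy.
      destruct Ha as [<-|Ha], Hb as [<-|Hb].
      * exfalso; apply (mlt_irrefl _ Hba).
      * apply Rext_c in Hxy. apply (Rext_o R S c _ _ _ (Hne b Hb)). eapply tc_low; eauto.
      * apply (Rext_o R S c _ _ _ (Hne a Ha)) in Hxy. apply Rext_c. apply tc1. eapply high_step; eauto.
      * apply (Rext_o R S c _ _ _ (Hne a Ha)) in Hxy. apply (Rext_o R S c _ _ _ (Hne b Hb)).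
        apply (proj2 (proj2 HF)) with a; auto.
  - intros x y p H HV. destruct (mod_eq_dec MOmega c) as [E|E].
    + subst c. apply Rext_c in H. exfalso. destruct H as [x y Hs|x y z Hs _];
        destruct Hs as [t [_ [Hmt _]]]; destruct t; simpl in Hmt; exact Hmt.
    + apply (Rext_o R S c _ _ _ E) in H. eapply HO; eauto.
  - intros a x y Ha. apply Rext_o; auto.
Qed.

Lemma ext_list : forall L {W : Type} (R : modality -> W -> W -> Prop) V S,
  RCframe S R -> omega_closed R V ->
  exists R', RCframe (L ++ S) R' /\ omega_closed R' V /\ (forall a x y, In a S -> (R' a x y <-> R a x y)).
Proof.
  induction L as [|c L IH]; intros W R V S HF HO.
  - exists R. simpl. split; [exact HF|split; [exact HO| tauto]].
  - destruct (IH W R V S HF HO) as [R1 [HF1 [HO1 HA1]]].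
    destruct (ext_step R1 V (L ++ S) c HF1 HO1) as [R2 [HF2 [HO2 HA2]]].
    exists R2. split; [exact HF2|split; [exact HO2|]].
    intros a x y Ha. rewrite HA2 by (apply in_or_app; right; auto). apply HA1; auto.
Qed.
Fixpoint tsat (t : tree) (F : fml) : Prop :=
  match F with
  | Var p => match t with Node vs _ => In p vs end
  | Top => True
  | And B C => tsat t B /\ tsat t C
  | Dia a B => match t with Node _ ks => exists t', In (a, t') ks /\ tsat t' B end
  end.

Lemma tsat_mono : forall F vs ks vs' ks', incl vs vs' -> incl ks ks' ->
  tsat (Node vs ks) F -> tsat (Node vs' ks') F.
Proof.
  induction F; simpl; intros vs ks vs' ks' H1 H2 H; auto.
  - destruct H; split; eauto.
  - destruct H as [t' [Hi Ht]]. exists t'; auto.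
Qed.

Lemma tsat_T : forall F, tsat (T F) F.
Proof.
  induction F as [p| |F1 IH1 F2 IH2|a F IH].
  - simpl; auto.
  - simpl; auto.
  - destruct (T F1) as [v1 k1] eqn:E1. destruct (T F2) as [v2 k2] eqn:E2.
    rewrite (T_and_eq F1 F2 v1 k1 v2 k2 E1 E2). simpl. split.
    + eapply tsat_mono; [apply incl_appl, incl_refl | apply incl_appl, incl_refl | ]. exact IH1.
    + eapply tsat_mono; [apply incl_appr, incl_refl | apply incl_appr, incl_refl | ]. exact IH2.
  - simpl. exists (T F). split; [left; reflexivity | exact IH].
Qed.

Lemma tsat_forces (t : tree) (R : modality -> node t -> node t -> Prop) (V : node t -> nat -> Prop) :
  (forall a x y, base_edge t a x y -> R a x y) -> (forall x p, base_val t x p -> V x p) ->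
  forall F (x : node t) s, subtree t (proj1_sig x) = Some s -> tsat s F -> forces R V x F.
Proof.
  intros HR HV F. induction F as [p| |F1 IH1 F2 IH2|a F IH]; intros x s Hs Ht; simpl in *.
  - destruct s as [vs ks]. apply HV. exists vs, ks. auto.
  - exact I.
  - destruct Ht; split; eauto.
  - destruct s as [vs ks]. destruct Ht as [t' [Hi Ht']].
    apply In_nth_error in Hi as [i Hi].
    assert (Hy : subtree t (proj1_sig x ++ [i]) = Some t').
    { rewrite subtree_app, Hs. simpl. rewrite Hi. reflexivity. }
    assert (Hy' : subtree t (proj1_sig x ++ [i]) <> None) by (rewrite Hy; discriminate).
    exists (exist _ (proj1_sig x ++ [i]) Hy'). split.
    + apply HR. exists i, vs, ks, t'. simpl. auto.
    + eapply IH; [|exact Ht']. simpl. exact Hy.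
Qed.

Lemma RCrel_label S t a x y : RCrel S t a x y -> In a S \/ base_edge t a x y.
Proof.
  intros H; induction H.
  - right; auto.
  - left. destruct (mmin_cases a b) as [E|E]; rewrite E; auto.
  - left; auto.
  - left; auto.
Qed.

Lemma RCrel_frame S t : RCframe S (RCrel S t).
Proof.
  split; [|split]; intros.
  - apply rc_comp with y; auto.
  - apply rc_eucl with a x; auto.
  - apply rc_incl with a; auto.
Qed.

Lemma MA_omega S A : incl (mods A) S -> omega_closed (RCrel S (T A)) (RCw_val S A).
Proof.
  intros Hi x y p H HV.
  destruct HV as [Hb | [z [Hz Hbz]]].
  - right; exists y; auto.
  - right; exists z. split; auto.
    assert (Hw : In MOmega S).
    { destruct (RCrel_label _ _ _ _ _ H) as [Hw|Hbe]; auto.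
      apply Hi. destruct Hbe as [i [vs [ks [t' [_ [Hs Hn]]]]]]. eapply labels_T; eauto. }
    exact (rc_comp S (T A) MOmega MOmega x y z Hw Hw H Hz).
Qed.

Lemma forces_agree {W} (R R' : modality -> W -> W -> Prop) V S :
  (forall a x y, In a S -> (R' a x y <-> R a x y)) ->
  forall F, incl (mods F) S -> forall x, forces R' V x F <-> forces R V x F.
Proof.
  intros HA F. induction F as [p| |F1 IH1 F2 IH2|a F IH]; simpl; intros Hi x.
  - tauto.
  - tauto.
  - rewrite IH1, IH2; [tauto| |]; intros u Hu; apply Hi; apply in_or_app; auto.
  - split; intros [y [Hy HF]]; exists y; split.
    + apply HA; auto. apply Hi; left; auto.
    + apply IH; auto. intros u Hu; apply Hi; right; auto.
    + apply HA; auto. apply Hi; left; auto.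
    + apply IH; auto. intros u Hu; apply Hi; right; auto.
Qed.

Theorem theorem5p5 (A B : fml) :
  deriv A B <->
  forces (RCrel (mods A ++ mods B) (T A)) (RCw_val (mods A ++ mods B) A)
         (root (T A)) B.
Proof.
  split; [|apply completeness].
  intros Hd. destruct (soundness A B Hd) as [L HL].
  set (S := mods A ++ mods B).
  assert (HiA : incl (mods A) S) by (apply incl_appl, incl_refl).
  assert (HiB : incl (mods B) S) by (apply incl_appr, incl_refl).
  destruct (ext_list L (RCrel S (T A)) (RCw_val S A) S (RCrel_frame S (T A)) (MA_omega S A HiA))
    as [R' [HF' [HO' HA']]].
  assert (HAroot : forces (RCrel S (T A)) (RCw_val S A) (root (T A)) A).
  { eapply tsat_forces; [ | | reflexivity | apply tsat_T].
    - intros; apply rc_base; auto.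
    - intros; left; auto. }
  apply (forces_agree _ _ _ S HA' B HiB).
  apply HL; [eapply RCframe_mono; [|exact HF']; apply incl_appl, incl_refl | exact HO' |].
  apply (forces_agree _ _ _ S HA' A HiA). exact HAroot.
Qed.
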